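(* Let $\alpha\in[0,1]$, let $\mathbf X\in\mathbb R^{d\times n}$, $\mathbf V\in\mathbb R^{m\times d}$, $\mathbf W\in\mathbb R^{k\times m}$, and for $i=1,\dots,m$ let $\boldsymbol\Lambda^i\in\mathbb R^{n\times n}$ be diagonal with $(\boldsymbol\Lambda^i)_{jj}=\sigma'((\mathbf V_{i\bullet}\mathbf X)_j)$, where $\sigma(z)=\max\{\alpha z,z\}$ is the Leaky-ReLU and $\sigma'$ takes values in $\{\alpha,1\}$ (any choice in $\{\alpha,1\}$ at $z=0$). Define $$\boldsymbol\Gamma=\sum_{i=1}^m\boldsymbol\Lambda^i\mathbf X^\top\mathbf V_{i\bullet}^\top\mathbf V_{i\bullet}\mathbf X\boldsymbol\Lambda^i,\qquad \widehat{\mathbf G}_O=\sum_{i=1}^m\boldsymbol\Lambda^i\mathbf X^\top\mathbf X\boldsymbol\Lambda^i\otimes\mathbf W_{\bullet i}\mathbf W_{\bullet i}^\top+\boldsymbol\Gamma\otimes\mathbf I_k\in\mathbb R^{kn\times kn}.$$ If $\alpha^2\sigma_{\min}^2(\mathbf X)\sigma_{\min}^2(\mathbf W)+\lambda_{\min}(\boldsymbol\Gamma)>0$, then $\widehat{\mathbf G}_O$ is positive definite and $$\kappa(\widehat{\mathbf G}_O)\le\frac{\sigma_{\max}^2(\mathbf X)\,\sigma_{\max}^2(\mathbf W)+\lambda_{\max}(\boldsymbol\Gamma)}{\alpha^2\,\sigma_{\min}^2(\mathbf X)\,\sigma_{\min}^2(\mathbf W)+\lambda_{\min}(\boldsymb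ol\Gamma)}.$$
   Context: $\mathbf X$ is the data matrix with columns the $n$ inputs; $\mathbf V_{i\bullet}$ is the $i$-th row of $\mathbf V$ and $\mathbf W_{\bullet i}$ the $i$-th column of $\mathbf W$; $\widehat{\mathbf G}_O$ has the same nonzero eigenvalues as the Gauss–Newton matrix of $F(\mathbf x)=\mathbf W\sigma(\mathbf V\mathbf x)$. Conventions: $\sigma_{\max}^2(\mathbf X)=\lambda_{\max}(\mathbf X^\top\mathbf X)$, $\sigma_{\min}^2(\mathbf X)=\lambda_{\min}(\mathbf X^\top\mathbf X)$, $\sigma_{\max}^2(\mathbf W)=\lambda_{\max}(\mathbf W\mathbf W^\top)$, $\sigma_{\min}^2(\mathbf W)=\lambda_{\min}(\mathbf W\mathbf W^\top)$. For a symmetric positive definite matrix, $\kappa=\lambda_{\max}/\lambda_{\min}$. $\otimes$ is the Kronecker product. *)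

(* Defs.v *)
From HB Require Import structures.
From mathcomp Require Import all_boot all_order all_algebra.
From mathcomp Require Import boolp classical_sets reals.
Set Implicit Arguments. Unset Strict Implicit. Unset Printing Implicit Defensive.
Import Order.TTheory GRing.Theory Num.Theory.
Local Open Scope ring_scope.
Local Open Scope classical_set_scope.

(* Kronecker product, standard (lexicographic) index convention:
   (A ⊗ B)_{(i,k),(j,l)} = A_{ij} B_{kl}, with (i,k) at position i*m2+k. *)
Definition kron (R : pzRingType) (m1 n1 m2 n2 : nat)
    (A : 'M[R]_(m1, n1)) (B : 'M[R]_(m2, n2)) : 'M[R]_(m1 * m2, n1 * n2) :=
  \matrix_(p, q)
    let ik := enum_val (cast_ord (esym (mxvec_cast m1 m2)) p) in
    let jl := enum_val (cast_ord (esym (mxvec_cast n1 n2)) q) in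
    A ik.1 jl.1 * B ik.2 jl.2.

Definition lambda_max (R : realType) (n : nat) (A : 'M[R]_n) : R :=
  sup [set a : R | eigenvalue A a].
Definition lambda_min (R : realType) (n : nat) (A : 'M[R]_n) : R :=
  inf [set a : R | eigenvalue A a].

Definition posdef (R : realType) (n : nat) (A : 'M[R]_n) : Prop :=
  A^T = A /\ forall x : 'cV[R]_n, x != 0 -> 0 < (x^T *m A *m x) 0 0.

Definition cond_num (R : realType) (n : nat) (A : 'M[R]_n) : R :=
  lambda_max A / lambda_min A.

Definition leaky_relu (R : realType) (alpha z : R) : R := Num.max (alpha * z) z.
Definition leaky_relu_deriv (R : realType) (alpha z s : R) : Prop :=
  (s = alpha \/ s = 1) /\ (0 < z -> s = 1) /\ (z < 0 -> s = alpha).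

(* Main.v *)
Require Import Defs.
From HB Require Import structures.
From mathcomp Require Import all_boot all_order all_algebra.
From mathcomp Require Import boolp classical_sets reals.
From mathcomp Require Import spectral sesquilinear complex polyrcf.
From mathcomp Require Import ring lra.
Import Order.TTheory GRing.Theory Num.Theory.
Local Open Scope ring_scope.
Section All.
Context {R : realType}.
Section Eig.
Local Open Scope classical_set_scope.
Implicit Types n : nat.

Lemma eig_bounded {n} (M : 'M[R]_n) :
  exists c, forall a, eigenvalue M a -> `|a| < c.
Proof.
exists (cauchy_bound (char_poly M)) => a.
rewrite eigenvalue_root_char => /rootP ra.
apply: cauchy_boundP ra; exact: monic_neq0 (char_poly_monic M).
Qed.

Lemma lmin_le {n} (M : 'M[R]_n) a : eigenvalue M a -> lambda_min M <= a.
Proof.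
move=> ea; have [c hc] := eig_bounded M.
have hl : has_lbound [set a : R | eigenvalue M a].
  exists (- c) => x /= ex; have := hc _ ex; rewrite ltr_norml => /andP[h _].
  exact: ltW.
exact: (ge_inf hl).
Qed.

Lemma lmax_ge {n} (M : 'M[R]_n) a : eigenvalue M a -> a <= lambda_max M.
Proof.
move=> ea; have [c hc] := eig_bounded M.
have hl : has_ubound [set a : R | eigenvalue M a].
  exists c => x /= ex; have := hc _ ex; rewrite ltr_norml => /andP[_ h].
  exact: ltW.
exact: (ub_le_sup hl).
Qed.

Lemma lmin_ge {n} (M : 'M[R]_n) c :
  (exists a, eigenvalue M a) -> (forall a, eigenvalue M a -> c <= a) ->
  c <= lambda_min M.
Proof. by move=> [a ea] h; apply: lb_le_inf; [exists a|move=> x /h]. Qed.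

Lemma lmax_le {n} (M : 'M[R]_n) c :
  (exists a, eigenvalue M a) -> (forall a, eigenvalue M a -> a <= c) ->
  lambda_max M <= c.
Proof. by move=> [a ea] h; apply: ge_sup; [exists a|move=> x /h]. Qed.

Lemma eig_empty {n} (M : 'M[R]_n) : ~ (exists a, eigenvalue M a) ->
  lambda_min M = 0 /\ lambda_max M = 0.
Proof.
move=> h; rewrite /lambda_min /lambda_max.
have -> : [set a : R | eigenvalue M a] = set0.
  rewrite predeqE => x; split => //= ex; apply: h; by exists x.
by rewrite inf0 sup0.
Qed.

Lemma lmin_le_lmax {n} (M : 'M[R]_n) : lambda_min M <= lambda_max M.
Proof.
have [[a ea]|ne] := pselect (exists a, eigenvalue M a).
  have h1 := lmin_le M a ea; have h2 := lmax_ge M a ea; exact: le_trans h1 h2.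
by have [-> ->] := eig_empty M ne.
Qed.

Lemma lmin_ge0 {n} (M : 'M[R]_n) : (forall a, eigenvalue M a -> 0 <= a) ->
  0 <= lambda_min M.
Proof.
move=> h; have [ex|ne] := pselect (exists a, eigenvalue M a).
  exact: lmin_ge M 0 ex h.
by have [-> _] := eig_empty M ne.
Qed.

Lemma lmax_ge0 {n} (M : 'M[R]_n) : (forall a, eigenvalue M a -> 0 <= a) ->
  0 <= lambda_max M.
Proof. move=> h; exact: le_trans (lmin_ge0 M h) (lmin_le_lmax M). Qed.

End Eig.

Section Ray.
Local Notation C := (R[i]).
Local Notation f := (real_complex R).
Local Notation Re := (@complex.Re R).
Lemma test {n} {M : 'M[R]_n} : M^T = M -> map_mx f M \is hermsymmx.
Proof.
move=> sM; apply: realsym_hermsym.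
  apply/is_hermitianmxP; rewrite expr0 scale1r. apply/matrixP=> i j; by rewrite !mxE /= -{1}sM mxE.
apply/mxOverP => i j; rewrite mxE.
by rewrite realE -[0]/(f 0) !lecR le_total.
Qed.


Lemma conj_f (x : R) : (f x)^* = f x.
Proof. by apply/eqP; rewrite eq_complex /= oppr0 !eqxx. Qed.

Lemma rayleigh n (M : 'M[R]_n) (u : 'rV[R]_n) : M^T = M ->
  lambda_min M * (u *m u^T) 0 0 <= (u *m M *m u^T) 0 0 <=
  lambda_max M * (u *m u^T) 0 0.
Proof.
move=> sM.
set Mc := map_mx f M.
have hM := test sM.
set P := spectralmx Mc; set d := spectral_diag Mc.
have HP : Mc = invmx P *m diag_mx d *m P by exact/orthomx_spectralP/hermitian_normalmx.
have Pu : P \in unitmx := spectral_unit Mc.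
have invP : invmx P = map_mx Num.conj P^T := invmx_unitary (spectral_unitarymx Mc).
have dreal j : d 0 j = f (Re (d 0 j)).
  by rewrite RRe_real //; exact: (mxOverP (hermitian_spectral_diag_real hM)).
have eigj j : eigenvalue M (Re (d 0 j)).
  have eMc : eigenvalue Mc (d 0 j).
    apply/eigenvalueP; exists (row j P).
      rewrite {1}HP !mulmxA -row_mul mulmxV //.
      have -> : row j 1%:M *m diag_mx d = d 0 j *: row j 1%:M.
        apply/rowP => l; rewrite mul_mx_diag !mxE.
        by case: (eqVneq j l) => [->|ne]; rewrite ?mulr1 ?mul1r ?mulr0 ?mul0r.
      by rewrite -scalemxAl -row_mul mul1mx.
    apply/eqP => h; have : row j P *m invmx P = 0 by rewrite h mul0mx.
    rewrite -row_mul mulmxV // => /rowP/(_ j); rewrite !mxE eqxx => /eqP.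
    by rewrite oner_eq0.
  move: eMc; rewrite eigenvalue_root_char dreal -map_char_poly fmorph_root.
  by rewrite -eigenvalue_root_char.
set uc := map_mx f u.
set y := uc *m invmx P.
have zeq j : (P *m map_mx f u^T) j 0 = (y 0 j)^*.
  rewrite !mxE rmorph_sum; apply: eq_bigr => l _.
  by rewrite invP !mxE rmorphM /= conj_f conjCK mulrC.
have E1 : f ((u *m M *m u^T) 0 0) = \sum_j d 0 j * (y 0 j * (y 0 j)^*).
  have -> : f ((u *m M *m u^T) 0 0) = (y *m diag_mx d *m (P *m map_mx f u^T)) 0 0.
    have -> : y *m diag_mx d *m (P *m map_mx f u^T) = uc *m Mc *m map_mx f u^T.
      by rewrite HP /y !mulmxA.
    by rewrite -!map_mxM [RHS]mxE.
  rewrite mxE; apply: eq_bigr => j _.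
  by rewrite zeq mul_mx_diag mxE [y 0 j * _]mulrC -mulrA.
have E2 : f ((u *m u^T) 0 0) = \sum_j y 0 j * (y 0 j)^*.
  have -> : f ((u *m u^T) 0 0) = (y *m (P *m map_mx f u^T)) 0 0.
    by rewrite /y mulmxA mulmxKV // -map_mxM [RHS]mxE.
  by rewrite mxE; apply: eq_bigr => j _; rewrite zeq.
have sj j : y 0 j * (y 0 j)^* = f (Re (y 0 j * (y 0 j)^*)).
  by rewrite RRe_real // ger0_real // mul_conjC_ge0.
have s0 j : 0 <= Re (y 0 j * (y 0 j)^*).
  by have := mul_conjC_ge0 (y 0 j); rewrite sj -[0]/(f 0) lecR.
have Q1 : (u *m M *m u^T) 0 0 = \sum_j Re (d 0 j) * Re (y 0 j * (y 0 j)^*).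
  apply: complexI; rewrite E1 rmorph_sum; apply: eq_bigr => j _.
  by rewrite {1}(dreal j) {1}(sj j) rmorphM.
have Q2 : (u *m u^T) 0 0 = \sum_j Re (y 0 j * (y 0 j)^*).
  apply: complexI; rewrite E2 rmorph_sum; apply: eq_bigr => j _.
  by rewrite {1}(sj j).
rewrite Q1 Q2 !mulr_sumr; apply/andP; split; apply: ler_sum => j _.
  by apply: ler_wpM2r => //; apply: lmin_le.
by apply: ler_wpM2r => //; apply: lmax_ge.
Qed.

End Ray.

Section K.

Definition qf {n} (M : 'M[R]_n) (v : 'rV[R]_n) := (v *m M *m v^T) 0 0.
Definition nr {n} (v : 'rV[R]_n) := (v *m v^T) 0 0.

Lemma qf_expand {n} (M : 'M[R]_n) v :
  qf M v = \sum_j \sum_i v 0 i * M i j * v 0 j.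
Proof.
rewrite /qf mxE; apply: eq_bigr => j _; rewrite mxE mulr_suml.
by apply: eq_bigr => i _; rewrite mxE.
Qed.

Lemma nr_expand {n} (v : 'rV[R]_n) : nr v = \sum_j v 0 j ^+ 2.
Proof. by rewrite /nr mxE; apply: eq_bigr => j _; rewrite mxE expr2. Qed.

Lemma nr_ge0 {n} (v : 'rV[R]_n) : 0 <= nr v.
Proof. by rewrite nr_expand sumr_ge0 // => j _; rewrite sqr_ge0. Qed.

Lemma nr_gt0 {n} (v : 'rV[R]_n) : v != 0 -> 0 < nr v.
Proof.
move=> nz; rewrite lt_neqAle nr_ge0 andbT; apply/eqP => h.
move/eqP: nz; apply; apply/rowP => j; rewrite mxE.
have : v 0 j ^+ 2 = 0.
  apply/eqP; rewrite eq_le sqr_ge0 andbT.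
  have := h; rewrite nr_expand (bigD1 j) //= => /esym/eqP.
  rewrite paddr_eq0 ?sqr_ge0 ?sumr_ge0 // => [/andP[/eqP -> _]//|i _].
  by rewrite sqr_ge0.
by move/eqP; rewrite sqrf_eq0 => /eqP.
Qed.

Lemma qfD {n} (A B : 'M[R]_n) v : qf (A + B) v = qf A v + qf B v.
Proof. by rewrite /qf mulmxDr mulmxDl mxE. Qed.

Lemma qf_sum {n m} (A : 'I_m -> 'M[R]_n) v :
  qf (\sum_i A i) v = \sum_i qf (A i) v.
Proof. by rewrite /qf mulmx_sumr mulmx_suml summxE. Qed.

Lemma qf_scale {n} (M : 'M[R]_n) v a : v *m M = a *: v -> qf M v = a * nr v.
Proof. by move=> h; rewrite /qf /nr h -scalemxAl mxE. Qed.

Lemma qf_diag {n} (M : 'M[R]_n) (d : 'rV[R]_n) v :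
  qf (diag_mx d *m M *m diag_mx d) v = qf M (v *m diag_mx d).
Proof. by rewrite /qf trmx_mul tr_diag_mx !mulmxA. Qed.

Lemma qf_gram {n p} (W : 'M[R]_(n, p)) v : qf (W *m W^T) v = nr (v *m W).
Proof. by rewrite /qf /nr trmx_mul !mulmxA. Qed.

Lemma qf_gramT {n p} (X : 'M[R]_(p, n)) v : qf (X^T *m X) v = nr (v *m X^T).
Proof. by rewrite /qf /nr trmx_mul trmxK !mulmxA. Qed.

Variables n k : nat.
Local Notation z r i c := (r 0 (mxvec_index i c)).

Lemma sum_idx (F : 'I_(n * k) -> R) :
  \sum_p F p = \sum_i \sum_c F (mxvec_index i c).
Proof.
rewrite pair_big /=.
rewrite (reindex (fun x : 'I_n * 'I_k => mxvec_index x.1 x.2)) //=.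
case: (@curry_mxvec_bij n k) => g h1 h2; exists g => [x _|y _].
  by case: x (h1 x isT).
by rewrite -[RHS](h2 y isT); case: (g y).
Qed.

Lemma kron_idx (A : 'M[R]_n) (B : 'M[R]_k) i c j l :
  kron A B (mxvec_index i c) (mxvec_index j l) = A i j * B c l.
Proof. by rewrite /kron mxE /mxvec_index !cast_ordK !enum_rankK. Qed.

Lemma qf_kron (A : 'M[R]_n) (B : 'M[R]_k) r :
  qf (kron A B) r =
  \sum_j \sum_l \sum_i \sum_c z r i c * (A i j * B c l) * z r j l.
Proof.
rewrite /qf mxE sum_idx; apply: eq_bigr => j _; apply: eq_bigr => l _.
rewrite mxE [r^T _ _]mxE sum_idx mulr_suml; apply: eq_bigr => i _.
rewrite mulr_suml; apply: eq_bigr => c _.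
by rewrite kron_idx.
Qed.


Lemma qf_kron1 (A : 'M[R]_n) (w : 'cV[R]_k) r :
  qf (kron A (w *m w^T)) r = qf A (\row_i \sum_c z r i c * w c 0).
Proof.
rewrite qf_kron qf_expand; apply: eq_bigr => j _.
rewrite exchange_big; apply: eq_bigr => i _.
rewrite !mxE mulr_sumr; apply: eq_bigr => l _.
rewrite !mulr_suml; apply: eq_bigr => c _.
rewrite !mxE big_ord1 !mxE; ring.
Qed.

Lemma qf_kronI (A : 'M[R]_n) r :
  qf (kron A (1%:M : 'M[R]_k)) r = \sum_c qf A (\row_i z r i c).
Proof.
rewrite qf_kron exchange_big; apply: eq_bigr => l _.
rewrite qf_expand; apply: eq_bigr => j _; apply: eq_bigr => i _.
rewrite (bigD1 l) //= big1 => [|c cl]; last by rewrite mxE (negbTE cl) !mulr0 mul0r.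
by rewrite !mxE eqxx addr0 mulr1.
Qed.

Lemma nr_idx (r : 'rV[R]_(n * k)) : nr r = \sum_i \sum_c z r i c ^+ 2.
Proof. by rewrite nr_expand sum_idx. Qed.

End K.

Section Main.

Lemma eig_ge0 {n} (M : 'M[R]_n) : (forall v, 0 <= qf M v) ->
  forall e, eigenvalue M e -> 0 <= e.
Proof.
move=> h e /eigenvalueP [v hv nz].
have := h v; rewrite (qf_scale _ _ _ hv) pmulr_lge0 //; exact: nr_gt0.
Qed.

Lemma trmx_kron m1 n1 m2 n2 (A : 'M[R]_(m1, n1)) (B : 'M[R]_(m2, n2)) :
  (kron A B)^T = kron A^T B^T.
Proof. by apply/matrixP => p q; rewrite /kron !mxE. Qed.


Lemma trmx_sumE m p q (F : 'I_m -> 'M[R]_(p, q)) :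
  (\sum_i F i)^T = \sum_i (F i)^T.
Proof.
by apply/matrixP => a b; rewrite mxE !summxE; apply: eq_bigr => i _; rewrite mxE.
Qed.

Lemma trmxD' p q (A B : 'M[R]_(p, q)) : (A + B)^T = A^T + B^T.
Proof. by apply/matrixP => a b; rewrite !mxE. Qed.

Lemma G_quad (alpha : R) (d n m k : nat)
    (X : 'M[R]_(d, n)) (V : 'M[R]_(m, d)) (W : 'M[R]_(k, m))
    (lam : 'I_m -> 'I_n -> R) :
  0 <= alpha -> alpha <= 1 ->
  (forall i j, lam i j = alpha \/ lam i j = 1) ->
  let Lam := fun i : 'I_m => diag_mx (\row_(j < n) lam i j) in
  let Gamma : 'M[R]_n :=
    \sum_(i < m) Lam i *m X^T *m (row i V)^T *m row i V *m X *m Lam i in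
  let G : 'M[R]_(n * k) :=
    \sum_(i < m) kron (Lam i *m X^T *m X *m Lam i) (col i W *m (col i W)^T)
    + kron Gamma (1%:M : 'M[R]_k) in
  forall r : 'rV[R]_(n * k),
  (alpha ^+ 2 * lambda_min (X^T *m X) * lambda_min (W *m W^T)
      + lambda_min Gamma) * nr r <= qf G r <=
  (lambda_max (X^T *m X) * lambda_max (W *m W^T) + lambda_max Gamma) * nr r.
Proof.
move=> a0 a1 hl Lam Gamma G r.
have sXX : (X^T *m X)^T = X^T *m X by rewrite trmx_mul trmxK.
have sWW : (W *m W^T)^T = W *m W^T by rewrite trmx_mul trmxK.
have sGam : Gamma^T = Gamma.
  rewrite /Gamma trmx_sumE; apply: eq_bigr => i _.
  by rewrite !trmx_mul !trmxK /Lam tr_diag_mx !mulmxA.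
have aXX : 0 <= lambda_min (X^T *m X).
  by apply: lmin_ge0; apply: eig_ge0 => v; rewrite qf_gramT nr_ge0.
have bWW : 0 <= lambda_min (W *m W^T).
  by apply: lmin_ge0; apply: eig_ge0 => v; rewrite qf_gram nr_ge0.
have AXX := lmin_le_lmax (X^T *m X).
have BWW := lmin_le_lmax (W *m W^T).
set z := fun i c => r 0 (mxvec_index i c).
set v := fun i : 'I_m => \row_(j < n) \sum_c z j c * (col i W) c 0.
have E : qf G r = \sum_i qf (X^T *m X) (v i *m Lam i)
                  + \sum_c qf Gamma (\row_j z j c).
  rewrite /G qfD qf_sum qf_kronI; congr (_ + _); apply: eq_bigr => i _.
  by rewrite qf_kron1 /Lam -qf_diag !mulmxA.
have hu i : lambda_min (X^T *m X) * nr (v i *m Lam i) <= qf (X^T *m X) (v i *m Lam i)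
            <= lambda_max (X^T *m X) * nr (v i *m Lam i).
  exact: rayleigh _ _ _ sXX.
have hnu i : alpha ^+ 2 * nr (v i) <= nr (v i *m Lam i) <= nr (v i).
  rewrite !nr_expand mulr_sumr; apply/andP; split; apply: ler_sum => j _;
    rewrite /Lam mul_mx_diag !mxE exprMn.
    rewrite mulrC; apply: ler_wpM2l; first exact: sqr_ge0.
    by case: (hl i j) => ->; rewrite ?lexx // expr1n expr_le1.
  rewrite -[leRHS]mulr1; apply: ler_wpM2l; first exact: sqr_ge0.
  case: (hl i j) => ->; rewrite ?expr1n //.
  by rewrite expr_le1.
have S1 : \sum_i nr (v i) = \sum_j qf (W *m W^T) (\row_c z j c).
  rewrite (eq_bigr (fun i => \sum_j (v i 0 j) ^+ 2)); last by move=> i _; rewrite nr_expand.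
  rewrite [RHS](eq_bigr (fun j => \sum_i ((\row_c z j c) *m W) 0 i ^+ 2)); last first.
    by move=> j _; rewrite qf_gram nr_expand.
  rewrite exchange_big; apply: eq_bigr => j _; apply: eq_bigr => i _.
  by rewrite !mxE; congr (_ ^+ 2); apply: eq_bigr => c _; rewrite !mxE.
have hW j : lambda_min (W *m W^T) * nr (\row_c z j c) <= qf (W *m W^T) (\row_c z j c)
            <= lambda_max (W *m W^T) * nr (\row_c z j c).
  exact: rayleigh _ _ _ sWW.
have S2 : \sum_j nr (\row_c z j c) = nr r.
  rewrite nr_idx; apply: eq_bigr => j _; rewrite nr_expand.
  by apply: eq_bigr => c _; rewrite mxE.
have hG c : lambda_min Gamma * nr (\row_j z j c) <= qf Gamma (\row_j z j c)
            <= lambda_max Gamma * nr (\row_j z j c).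
  exact: rayleigh _ _ _ sGam.
have S3 : \sum_c nr (\row_j z j c) = nr r.
  rewrite nr_idx exchange_big; apply: eq_bigr => c _; rewrite nr_expand.
  by apply: eq_bigr => j _; rewrite mxE.
have L1 : lambda_min (X^T *m X) * \sum_i nr (v i *m Lam i)
           <= \sum_i qf (X^T *m X) (v i *m Lam i)
           <= lambda_max (X^T *m X) * \sum_i nr (v i *m Lam i).
  rewrite !mulr_sumr; apply/andP; split; apply: ler_sum => i _;
  by have /andP[] := hu i.
have L2 : alpha ^+ 2 * \sum_i nr (v i) <= \sum_i nr (v i *m Lam i)
           <= \sum_i nr (v i).
  rewrite !mulr_sumr; apply/andP; split; apply: ler_sum => i _;
  by have /andP[] := hnu i.
have L3 : lambda_min (W *m W^T) * nr r <= \sum_j qf (W *m W^T) (\row_c z j c)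
           <= lambda_max (W *m W^T) * nr r.
  rewrite -S2 !mulr_sumr; apply/andP; split; apply: ler_sum => j _;
  by have /andP[] := hW j.
have L4 : lambda_min Gamma * nr r <= \sum_c qf Gamma (\row_j z j c)
           <= lambda_max Gamma * nr r.
  rewrite -S3 !mulr_sumr; apply/andP; split; apply: ler_sum => c _;
  by have /andP[] := hG c.
rewrite E; rewrite S1 in L2.
move: L1 L2 L3 L4.
set T1 := \sum_i qf _ _; set U := \sum_i nr _; set Sw := \sum_j qf _ _.
set T2 := \sum_c qf _ _; set Nr := nr r.
set a := lambda_min (X^T *m X); set A := lambda_max (X^T *m X).
set b := lambda_min (W *m W^T); set B := lambda_max (W *m W^T).
set g := lambda_min Gamma; set Gm := lambda_max Gamma.
move=> /andP[L1a L1b] /andP[L2a L2b] /andP[L3a L3b] /andP[L4a L4b].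
have N0 : 0 <= Nr by exact: nr_ge0.
have A0 : 0 <= A by exact: le_trans aXX AXX.
have h1 : 0 <= a * (U - alpha ^+ 2 * Sw) by apply: mulr_ge0; rewrite // subr_ge0.
have h2 : 0 <= a * alpha ^+ 2 * (Sw - b * Nr).
  by apply: mulr_ge0; [apply: mulr_ge0; rewrite // sqr_ge0|rewrite subr_ge0].
have h3 : 0 <= A * (Sw - U) by apply: mulr_ge0; rewrite // subr_ge0.
have h4 : 0 <= A * (B * Nr - Sw) by apply: mulr_ge0; rewrite // subr_ge0.
apply/andP; split; nra.
Qed.

End Main.
End All.

Theorem mainTheorem5 (R : realType) (alpha : R) (d n m k : nat)
    (X : 'M[R]_(d, n)) (V : 'M[R]_(m, d)) (W : 'M[R]_(k, m))
    (lam : 'I_m -> 'I_n -> R) :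
  0 <= alpha <= 1 ->
  (forall (i : 'I_m) (j : 'I_n),
      leaky_relu_deriv alpha ((row i V *m X) 0 j) (lam i j)) ->
  let Lam := fun i : 'I_m => diag_mx (\row_(j < n) lam i j) in
  let Gamma : 'M[R]_n :=
    \sum_(i < m) Lam i *m X^T *m (row i V)^T *m row i V *m X *m Lam i in
  let G : 'M[R]_(n * k) :=
    \sum_(i < m) kron (Lam i *m X^T *m X *m Lam i) (col i W *m (col i W)^T)
    + kron Gamma (1%:M : 'M[R]_k) in
  0 < alpha ^+ 2 * lambda_min (X^T *m X) * lambda_min (W *m W^T)
      + lambda_min Gamma ->
  posdef G /\
  cond_num G <=
    (lambda_max (X^T *m X) * lambda_max (W *m W^T) + lambda_max Gamma)
    / (alpha ^+ 2 * lambda_min (X^T *m X) * lambda_min (W *m W^T)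
       + lambda_min Gamma).
Proof.
move=> /andP[a0 a1] hder Lam Gamma G hD.
have hl : forall i j, lam i j = alpha \/ lam i j = 1 := fun i j => (hder i j).1.
set D := _ + lambda_min Gamma in hD *.
set N := _ + lambda_max Gamma.
have Q : forall r, D * nr r <= qf G r <= N * nr r by exact: G_quad.
have sGam : Gamma^T = Gamma.
  rewrite /Gamma trmx_sumE; apply: eq_bigr => i _.
  by rewrite !trmx_mul !trmxK /Lam tr_diag_mx !mulmxA.
have sG : G^T = G.
  rewrite /G trmxD' trmx_sumE trmx_kron sGam trmx1; congr (_ + _).
  apply: eq_bigr => i _.
  by rewrite trmx_kron !trmx_mul !trmxK /Lam tr_diag_mx !mulmxA.
split.
  split => // x nz.
  have := Q x^T; rewrite /qf trmxK => /andP[h _].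
  apply: lt_le_trans h; apply: mulr_gt0 => //; apply: nr_gt0.
  by rewrite trmx_eq0.
have aXX : 0 <= lambda_min (X^T *m X).
  by apply: lmin_ge0; apply: eig_ge0 => v; rewrite qf_gramT nr_ge0.
have bWW : 0 <= lambda_min (W *m W^T).
  by apply: lmin_ge0; apply: eig_ge0 => v; rewrite qf_gram nr_ge0.
have AXX := lmin_le_lmax (X^T *m X).
have BWW := lmin_le_lmax (W *m W^T).
have GG := lmin_le_lmax Gamma.
have ND : D <= N.
  rewrite /D /N; apply: lerD => //.
  have h1 : alpha ^+ 2 <= 1 by rewrite expr_le1.
  have h2 : lambda_min (X^T *m X) * lambda_min (W *m W^T)
            <= lambda_max (X^T *m X) * lambda_max (W *m W^T) by apply: ler_pM.
  have h3 : alpha ^+ 2 * (lambda_min (X^T *m X) * lambda_min (W *m W^T))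
            <= lambda_min (X^T *m X) * lambda_min (W *m W^T).
    by apply: ler_piMl => //; apply: mulr_ge0.
  rewrite -mulrA; exact: le_trans h3 h2.
have N0 : 0 <= N by apply: le_trans ND; apply: ltW.
have eigb e : eigenvalue G e -> D <= e <= N.
  move/eigenvalueP => [v hv nz]; have := Q v; rewrite (qf_scale _ _ _ hv).
  by have vp := nr_gt0 _ nz; rewrite !ler_pM2r.
rewrite /cond_num.
have [ex|ne] := pselect (exists a, eigenvalue G a); last first.
  have [-> ->] := eig_empty G ne; rewrite mul0r.
  by apply: divr_ge0 => //; apply: ltW.
have hmin : D <= lambda_min G by apply: lmin_ge => // e /eigb /andP[].
have hmax : lambda_max G <= N by apply: lmax_le => // e /eigb /andP[].
have Dm : 0 < lambda_min G by exact: lt_le_trans hD hmin.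
apply: (@le_trans _ _ (N / lambda_min G)).
  by apply: ler_wpM2r => //; rewrite invr_ge0 ltW.
apply: ler_wpM2l => //.
by rewrite lef_pV2 ?posrE.
Qed.
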